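(* Let $(\mathbf{w},\mathbf{u},q)$ be a sufficiently smooth solution of the GePUP-E formulation (described in the context) on $\Omega\times[t_0,\infty)$. Then $$\frac{\partial(\mathbf{n}\cdot\mathbf{w})}{\partial t}=-\lambda\,\mathbf{n}\cdot\mathbf{w}\quad\text{on }\partial\Omega,$$ and thus $\mathbf{n}\cdot\mathbf{w}(t)=e^{-\lambda(t-t_0)}\mathbf{n}\cdot\mathbf{w}(t_0)$ on $\partial\Omega$. In particular, if $\mathbf{n}\cdot\mathbf{w}(t_0)=0$ on $\partial\Omega$, then $\mathbf{n}\cdot\mathbf{w}(t)=0$ on $\partial\Omega$ for all $t>t_0$.
   Context: $\Omega\subset\mathbb{R}^D$ is a bounded connected open set with sufficiently smooth boundary, unit outward normal $\mathbf{n}$ and unit tangent vector(s) $\boldsymbol{\tau}$ on $\partial\Omega$. $\nu>0$ is the kinematic viscosity, $\mathbf{g}$ a given body force, $\lambda\ge 0$ a penalty parameter. The Leray–Helmholtz projection $\mathscr{P}$ maps a $C^1$ vector field $\mathbf{v}^*$ to $\mathbf{v}^*-\nabla\phi$ where $\Delta\phi=\nabla\cdot\mathbf{v}^*$ in $\Omega$ and $\mathbf{n}\cdot\nabla\phi=\mathbf{n}\cdot\mathbf{v}^*$ on $\partial\Omega$ (so $\mathscr{P}\mathbf{v}^*$ is divergence-free with zero normal component). The GePUP-E formulation is the system for $(\mathbf{w},\mathbf{u},q)$: $\partial_t\mathbf{w}=\mathbf{g}-\mathbf{u}\cdot\nabla\mathbf{u}-\nabla q+\nu\Delta\mathbf{w}$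 in $\Omega$; $\mathbf{w}\cdot\boldsymbol{\tau}=0$ and $\nabla\cdot\mathbf{w}=0$ on $\partial\Omega$; $\mathbf{u}=\mathscr{P}\mathbf{w}$ in $\Omega$, $\mathbf{u}\cdot\mathbf{n}=0$ on $\partial\Omega$; $\Delta q=\nabla\cdot(\mathbf{g}-\mathbf{u}\cdot\nabla\mathbf{u})$ in $\Omega$; $\mathbf{n}\cdot\nabla q=\mathbf{n}\cdot(\mathbf{g}-\mathbf{u}\cdot\nabla\mathbf{u}+\nu\Delta\mathbf{w})+\lambda\,\mathbf{n}\cdot\mathbf{w}$ on $\partial\Omega$; with initial condition $\mathbf{w}(\mathbf{x},t_0)=\mathbf{u}(\mathbf{x},t_0)$ for all $\mathbf{x}\in\overline{\Omega}$. *)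

(* Defs.v *)
From HB Require Import structures.
From mathcomp Require Import all_boot all_order all_algebra.
From mathcomp Require Import all_classical all_reals all_analysis.
Set Implicit Arguments. Unset Strict Implicit. Unset Printing Implicit Defensive.
Import Order.TTheory GRing.Theory Num.Theory.
Import numFieldNormedType.Exports.
Local Open Scope classical_set_scope.
Local Open Scope ring_scope.

Section GePUP.
Variable R : realType.

Fixpoint Ck (k : nat) (V W : normedModType R) (f : V -> W) : Prop :=
  match k with
  | 0 => continuous f
  | k.+1 => (forall x, differentiable f x) /\ forall v : V, Ck k (fun x => 'D_v f x)
  end.

Definition smooth (V W : normedModType R) (f : V -> W) : Prop := forall k, Ck k f.

Variable D : nat.
Notation vec := 'rV[R]_D.

Definition dotp (a b : vec) : R := \sum_(i < D) a ord0 i * b ord0 i.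
Definition enorm (a : vec) : R := Num.sqrt (dotp a a).

Definition evec (i : 'I_D) : vec := \row_j (i == j)%:R.

Definition partial (W : normedModType R) (i : 'I_D) (f : vec -> W) (x : vec) : W :=
  'D_(evec i) f x.

Definition grad (f : vec -> R) (x : vec) : vec := \row_i partial i f x.
Definition div (f : vec -> vec) (x : vec) : R := \sum_(i < D) partial i f x ord0 i.
Definition lap (W : normedModType R) (f : vec -> W) (x : vec) : W :=
  \sum_(i < D) partial i (partial i f) x.
Definition convect (u v : vec -> vec) (x : vec) : vec :=
  \sum_(i < D) u x ord0 i *: partial i v x.

Definition boundary (A : set vec) : set vec := closure A `\` interior A.

(* Omega is a bounded connected open set with smooth boundary and n is its unit
   outward normal: Omega = {psi < 0}, boundary = {psi = 0}, grad psi <> 0 there,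
   and n = grad psi / |grad psi| on the boundary. *)
Definition smooth_domain (Om : set vec) (n : vec -> vec) : Prop :=
  open Om /\ bounded_set Om /\ connected Om /\
  exists psi : vec -> R, smooth psi /\
    (forall x, Om x <-> psi x < 0) /\
    (forall x, boundary Om x <-> psi x = 0) /\
    (forall x, boundary Om x ->
       grad psi x != 0 /\ n x = (enorm (grad psi x))^-1 *: grad psi x).

Definition st_smooth (W : normedModType R) (f : vec -> R -> W) : Prop :=
  smooth (fun p : vec * R => f p.1 p.2).

(* u(.,t) = P w(.,t) (Leray-Helmholtz projection) for t >= t0:
   u = w - grad phi, Lap phi = div w in Omega, n.grad phi = n.w on the boundary *)
Definition leray_rel (Om : set vec) (n : vec -> vec) (t0 : R)
    (w u : vec -> R -> vec) : Prop :=
  forall t, t0 <= t -> exists phi : vec -> R,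
    Ck 2 phi /\
    (forall x, closure Om x -> u x t = w x t - grad phi x) /\
    (forall x, Om x -> lap phi x = div (fun y => w y t) x) /\
    (forall x, boundary Om x -> dotp (n x) (grad phi x) = dotp (n x) (w x t)).

Definition GePUP_E (Om : set vec) (n : vec -> vec) (nu lam t0 : R)
    (g w u : vec -> R -> vec) (q : vec -> R -> R) : Prop :=
  (forall x t, Om x -> t0 <= t ->
     derive1 (fun s => w x s) t =
       g x t - convect (fun y => u y t) (fun y => u y t) x
       - grad (fun y => q y t) x + nu *: lap (fun y => w y t) x) /\
  (forall x t, boundary Om x -> t0 <= t ->
     (forall tau : vec, dotp tau (n x) = 0 -> dotp (w x t) tau = 0) /\
     div (fun y => w y t) x = 0) /\
  leray_rel Om n t0 w u /\
  (forall x t, boundary Om x -> t0 <= t -> dotp (u x t) (n x) = 0) /\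
  (forall x t, Om x -> t0 <= t ->
     lap (fun y => q y t) x =
       div (fun y => g y t - convect (fun z => u z t) (fun z => u z t) y) x) /\
  (forall x t, boundary Om x -> t0 <= t ->
     dotp (n x) (grad (fun y => q y t) x) =
       dotp (n x) (g x t - convect (fun y => u y t) (fun y => u y t) x
                   + nu *: lap (fun y => w y t) x)
       + lam * dotp (n x) (w x t)) /\
  (forall x, closure Om x -> w x t0 = u x t0).

End GePUP.

(* Main.v *)
Require Import Defs.
From HB Require Import structures.
From mathcomp Require Import all_boot all_order all_algebra.
From mathcomp Require Import all_classical all_reals all_analysis.
Import Order.TTheory GRing.Theory Num.Theory.
Import numFieldNormedType.Exports.
Local Open Scope classical_set_scope.
Local Open Scope ring_scope.
From mathcomp Require Import lra.
Section S.
Variable R : realType.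
Variable D : nat.
Notation vec := 'rV[R]_D.

Lemma slice_q (Z : normedModType R) (F : vec * R -> Z) (y v : vec) (t : R) :
  (fun h : R => h^-1 *: ((F \o shift (y, t)) (h *: (v, 0)) - F (y, t))) =
  (fun h : R => h^-1 *: (((fun z => F (z, t)) \o shift y) (h *: v) - F (y, t))).
Proof.
apply/funext => h /=. congr (_ *: (F _ - _)).
change ((h *: v + y, h *: (0:R) + t) = (h *: v + y, t)); by rewrite scaler0 add0r.
Qed.

Lemma D_space (Z : normedModType R) (F : vec * R -> Z) (y v : vec) (t : R) :
  'D_v (fun z => F (z, t)) y = 'D_((v, 0)) F (y, t).
Proof. by rewrite /derive slice_q. Qed.

Lemma time_q (Z : normedModType R) (F : vec * R -> Z) (x : vec) (t : R) :
  (fun h : R => h^-1 *: ((F \o shift (x, t)) (h *: ((0:vec), (1:R))) - F (x, t))) =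
  (fun h : R => h^-1 *: (((fun s => F (x, s)) \o shift t) (h *: 1) - F (x, t))).
Proof.
apply/funext => h /=. congr (_ *: (F _ - _)).
change ((h *: (0:vec) + x, h *: (1:R) + t) = (x, h *: 1 + t)); by rewrite scaler0 add0r.
Qed.

Lemma D_time (Z : normedModType R) (F : vec * R -> Z) (x : vec) (t : R) :
  derive1 (fun s => F (x, s)) t = 'D_(((0:vec), (1:R))) F (x, t).
Proof. by rewrite derive1E /derive time_q. Qed.

Lemma derivable_time (Z : normedModType R) (F : vec * R -> Z) (x : vec) (t : R) :
  derivable F (x, t) ((0:vec), (1:R)) -> derivable (fun s => F (x, s)) t 1.
Proof. by rewrite /derivable time_q. Qed.

Lemma cont_slice (Z : normedModType R) (F : vec * R -> Z) (t : R) :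
  continuous F -> continuous (fun y => F (y, t)).
Proof.
move=> cF y.
have cp : {for y, continuous (fun z : vec => (z, t))}.
  apply: differentiable_continuous; apply: differentiable_pair => //.
exact: (@continuous_comp _ _ _ (fun z : vec => (z, t)) F y cp (cF _)).
Qed.

Lemma cont_sum (T : topologicalType) (Z : normedModType R) (I : Type) (r : seq I)
  (F : I -> T -> Z) : (forall i, continuous (F i)) ->
  continuous (fun x => \sum_(i <- r) F i x).
Proof.
move=> cF; elim: r => [|a r IH].
  have -> : (fun x => \sum_(i <- [::]) F i x) = (fun _ => 0) by apply/funext=> x; rewrite big_nil.
  exact: cst_continuous.
have -> : (fun x => \sum_(i <- a :: r) F i x) = F a + (fun x => \sum_(i <- r) F i x).
  by apply/funext=> x; rewrite big_cons.
by move=> x; apply: continuousD; [exact: cF | exact: IH].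
Qed.


Lemma dotpD (c a b : vec) : dotp c (a + b) = dotp c a + dotp c b.
Proof. by rewrite /dotp -big_split; apply: eq_bigr => i _; rewrite mxE mulrDr. Qed.
Lemma dotpN (c a : vec) : dotp c (- a) = - dotp c a.
Proof. by rewrite /dotp -sumrN; apply: eq_bigr => i _; rewrite mxE mulrN. Qed.
Lemma dotpB (c a b : vec) : dotp c (a - b) = dotp c a - dotp c b.
Proof. by rewrite dotpD dotpN. Qed.
Lemma dotpZ (c a : vec) k : dotp c (k *: a) = k * dotp c a.
Proof. by rewrite /dotp mulr_sumr; apply: eq_bigr => i _; rewrite mxE mulrCA. Qed.

Lemma dotp_cont (c : vec) : continuous (dotp c).
Proof.
apply: (@cont_sum _ R _ _ (fun i (b : vec) => c ord0 i * b ord0 i)) => i b.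
apply: continuousM; first exact: cst_continuous.
exact: coord_continuous.
Qed.

Lemma derive1_dotp (c : vec) (f : R -> vec) t : derivable f t 1 ->
  derive1 (fun s => dotp c (f s)) t = dotp c (derive1 f t).
Proof.
move=> df; rewrite !derive1E.
apply/cvg_lim => //.
have Hq := df.
have := cvg_comp _ _ Hq (dotp_cont c ('D_1 f t)).
apply: cvg_trans; apply: near_eq_cvg; near=> h.
by rewrite /= dotpZ dotpB.
Unshelve. all: by end_near.
Qed.


Section Sm.
Variable (Z : normedModType R) (F : vec * R -> Z).
Hypothesis sF : smooth F.

Lemma sm_cont : continuous F.
Proof. exact: (sF 0). Qed.
Lemma sm_diff p : differentiable F p.
Proof. by have [] := sF 1; move=> h _; exact: h. Qed.
Lemma sm_cont1 v : continuous ('D_v F).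
Proof. by have [_ h] := sF 1; exact: (h v). Qed.
Lemma sm_cont2 v v' : continuous ('D_v' ('D_v F)).
Proof. by have [_ h] := sF 2; have [_ h2] := h v; exact: (h2 v'). Qed.

Lemma partial_slice i t :
  partial i (fun z => F (z, t)) = fun y => 'D_((evec R i, 0)) F (y, t).
Proof. by apply/funext => y; rewrite /partial D_space. Qed.

Lemma partial_slice_cont i t : continuous (partial i (fun z => F (z, t))).
Proof. rewrite partial_slice; exact: (@cont_slice _ (fun p => (derive F p ((evec R i, 0)))) t (sm_cont1 _)). Qed.

Lemma lap_slice_cont t : continuous (lap (fun z => F (z, t))).
Proof.
rewrite /lap.
apply: (@cont_sum _ Z _ _ (fun i y => partial i (partial i (fun z => F (z, t))) y)) => i.
rewrite partial_slice.
have -> : partial i (fun y => 'D_((evec R i, 0)) F (y, t)) =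
   fun y => 'D_((evec R i, 0)) ('D_((evec R i, 0)) F) (y, t).
  by apply/funext => y; rewrite /partial (@D_space _ (fun p => 'D_((evec R i, 0)) F p)).
exact: (@cont_slice _ (fun p => derive (derive F ^~ (evec R i, 0)) p (evec R i, 0)) t (sm_cont2 _ _)).
Qed.

Lemma dt_cont t : continuous (fun y => derive1 (fun s => F (y, s)) t).
Proof.
have -> : (fun y => derive1 (fun s => F (y, s)) t) = fun y => 'D_(((0:vec), (1:R))) F (y, t).
  by apply/funext => y; rewrite D_time.
exact: (@cont_slice _ (fun p => derive F p ((0:vec), (1:R))) t (sm_cont1 _)).
Qed.

Lemma dt_derivable x t : derivable (fun s => F (x, s)) t 1.
Proof. by apply: derivable_time; apply: diff_derivable; exact: sm_diff. Qed.

End Sm.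

Lemma convect_cont (F : vec * R -> vec) t : smooth F ->
  continuous (convect (fun z => F (z, t)) (fun z => F (z, t))).
Proof.
move=> sF; rewrite /convect.
apply: (@cont_sum _ _ _ _ (fun i y => F (y, t) ord0 i *: partial i (fun z => F (z, t)) y)) => i y.
apply: continuousZ; last exact: partial_slice_cont.
apply: (@continuous_comp _ _ _ (fun z => F (z, t)) (fun M : vec => M ord0 i)).
  exact: (@cont_slice _ F t (@sm_cont _ F sF) y).
exact: coord_continuous.
Qed.

Lemma dot_grad_cont (F : vec * R -> R) t (c : vec) : smooth F ->
  continuous (fun y => dotp c (grad (fun z => F (z, t)) y)).
Proof.
move=> sF.
have -> : (fun y => dotp c (grad (fun z => F (z, t)) y)) =
  fun y => \sum_(i < D) c ord0 i * partial i (fun z => F (z, t)) y.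
  by apply/funext => y; rewrite /dotp; apply: eq_bigr => i _; rewrite /grad mxE.
apply: (@cont_sum _ R _ _ (fun i y => c ord0 i * partial i (fun z => F (z, t)) y)) => i y.
apply: continuousM; first exact: cst_continuous.
exact: partial_slice_cont.
Qed.

Lemma closure_zero (Om : set vec) (E : vec -> R) x : continuous E ->
  (forall y, Om y -> E y = 0) -> closure Om x -> E x = 0.
Proof.
move=> cE E0 cx.
have cl : closed (E @^-1` [set 0]).
  apply: preimage_closed; first by move=> y _; exact: cE.
  exact: closed_eq.
have sub : Om `<=` E @^-1` [set 0] by move=> y Oy; exact: E0.
have := closureS sub cx; by rewrite -((closure_id _).1 cl).
Qed.

Lemma cD (V : normedModType R) (f g : vec -> V) x :
  {for x, continuous f} -> {for x, continuous g} -> {for x, continuous (fun y => f y + g y)}.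
Proof. exact: continuousD. Qed.
Lemma cB (V : normedModType R) (f g : vec -> V) x :
  {for x, continuous f} -> {for x, continuous g} -> {for x, continuous (fun y => f y - g y)}.
Proof. exact: continuousB. Qed.
Lemma cZ (V : normedModType R) (k : R) (f : vec -> V) x :
  {for x, continuous f} -> {for x, continuous (fun y => k *: f y)}.
Proof. by move=> h; apply: continuousZ => //; exact: cst_continuous. Qed.
Lemma cC (c : vec) (f : vec -> vec) x :
  {for x, continuous f} -> {for x, continuous (fun y => dotp c (f y))}.
Proof. move=> h; exact: (continuous_comp h (dotp_cont c _)). Qed.

Lemma derivable_dotp (c : vec) (f : R -> vec) t : derivable f t 1 ->
  derivable (fun s => dotp c (f s)) t 1.
Proof.
move=> df; apply/cvg_ex; exists (dotp c ('D_1 f t)).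
have := cvg_comp _ _ df (dotp_cont c ('D_1 f t)).
apply: cvg_trans; apply: near_eq_cvg; near=> h.
by rewrite /= dotpZ dotpB.
Unshelve. all: by end_near.
Qed.

Lemma ode (f : R -> R) (lam t0 : R) : (forall s, derivable f s 1) ->
  (forall s, t0 <= s -> derive1 f s = - lam * f s) ->
  forall t, t0 <= t -> f t = expR (- lam * (t - t0)) * f t0.
Proof.
move=> df hf t; rewrite le_eqVlt => /orP[/eqP <-|tt].
  by rewrite subrr mulr0 expR0 mul1r.
pose e := fun s : R => expR (lam * s).
have de (s : R) : is_derive s (1:R) e (expR (lam * s) * lam).
  have h1 : is_derive s 1 (fun s => lam * s) lam.
    have := @is_deriveZ _ _ _ id lam s (1:R) (1:R) (is_derive_id s (1:R)).
    by rewrite /GRing.scale /= mulr1.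
  exact: (@is_derive1_comp R expR (fun s => lam * s) s _ _ _ h1).
have dh (s : R) : t0 <= s -> is_derive s 1 (f * e) (0:R).
  move=> s0.
  have := @is_deriveM R R f e s 1 _ _ (derivableP (df s)) (de s).
  rewrite -derive1E hf //. rewrite /GRing.scale /= /e.
  by have -> : f s * (expR (lam * s) * lam) + expR (lam * s) * (- lam * f s) = 0 by lra.
have dh' : forall s, s \in `]t0, t[ -> is_derive s 1 (f * e) ((fun _ => (0:R)) s).
  by move=> s; rewrite in_itv /= => /andP[s0 _]; exact: dh (ltW s0).
have ct : {within `[t0, t], continuous (f * e)}.
  apply: continuous_subspaceT => x.
  apply: differentiable_continuous; apply/derivable1_diffP.
  apply: derivableM; [exact: df | exact: (@ex_derive _ _ _ _ _ _ _ (de x))].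
have [c _ ] := @MVT R (f * e) (fun _ => 0) t0 t tt dh' ct.
rewrite mul0r => /eqP; rewrite subr_eq0 => /eqP H.
have : f t * e t = f t0 * e t0 by exact: H.
rewrite /e => H2.
have -> : f t = f t0 * expR (lam * t0) * (expR (lam * t))^-1.
  by rewrite -H2 mulrK // unitfE gt_eqF // expR_gt0.
rewrite -expRN -mulrA -expRD mulrC; congr (expR _ * _); lra.
Qed.
End S.

Theorem lemma5 (R : realType) (D : nat) (Om : set 'rV[R]_D) (n : 'rV[R]_D -> 'rV[R]_D)
    (nu lam t0 : R) (g w u : 'rV[R]_D -> R -> 'rV[R]_D) (q : 'rV[R]_D -> R -> R) :
  smooth_domain Om n -> 0 < nu -> 0 <= lam ->
  st_smooth g -> st_smooth w -> st_smooth u -> st_smooth q ->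
  GePUP_E Om n nu lam t0 g w u q ->
  (forall x t, boundary Om x -> t0 <= t ->
     derive1 (fun s => dotp (n x) (w x s)) t = - lam * dotp (n x) (w x t)) /\
  (forall x t, boundary Om x -> t0 <= t ->
     dotp (n x) (w x t) = expR (- lam * (t - t0)) * dotp (n x) (w x t0)) /\
  ((forall x, boundary Om x -> dotp (n x) (w x t0) = 0) ->
     forall x t, boundary Om x -> t0 < t -> dotp (n x) (w x t) = 0).
Proof.
move=> _ _ _ sg sw su sq [Hmom [_ [_ [_ [_ [Hneu _]]]]]].
have P1 : forall x t, boundary Om x -> t0 <= t ->
     derive1 (fun s => dotp (n x) (w x s)) t = - lam * dotp (n x) (w x t).
  move=> x t bx tt.
  rewrite (@derive1_dotp R D (n x) _ t (@dt_derivable R D _ _ sw x t)).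
  pose E := fun y => dotp (n x) (derive1 (fun s => w y s) t -
     (g y t - convect (fun z => u z t) (fun z => u z t) y + nu *: lap (fun z => w z t) y))
     + dotp (n x) (grad (fun z => q z t) y).
  have cE : continuous E.
    move=> y; rewrite /E; refine (@cD R D R _ _ y _ _); last exact: (@dot_grad_cont R D _ t (n x) sq y).
    apply: cC; apply: cB; first exact: (@dt_cont R D _ _ sw t y).
    apply: cD; last by apply: cZ; exact: (@lap_slice_cont R D _ _ sw t y).
    apply: cB; first exact: (@cont_slice R D _ _ t (@sm_cont R D _ _ sg) y).
    exact: (@convect_cont R D _ t su y).
  have E0 : forall y, Om y -> E y = 0.
    move=> y Oy; rewrite /E (Hmom y t Oy tt).
    rewrite !(dotpD, dotpN, dotpZ); lra.
  have := @closure_zero R D Om E x cE E0 bx.1.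
  rewrite /E dotpB dotpD dotpB dotpZ Hneu // dotpD dotpB dotpZ.
  lra.
have P2 : forall x t, boundary Om x -> t0 <= t ->
     dotp (n x) (w x t) = expR (- lam * (t - t0)) * dotp (n x) (w x t0).
  move=> x t bx; apply: (@ode R (fun s => dotp (n x) (w x s)) lam t0) => [s|s st].
    exact: (@derivable_dotp R D (n x) _ s (@dt_derivable R D _ _ sw x s)).
  exact: P1.
split; first exact: P1.
split; first exact: P2.
move=> H0 x t bx tt; by rewrite P2 ?H0 ?mulr0 // ltW.
Qed.
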